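(* Let $m$ be a positive integer, $1\le i\le m$, and let $G(\mathbf{l})$ be a function of $\mathbf{l}=(l_1,\ldots,l_m)\in\mathbb{Z}^m$. Then, with $D_i$ acting on the variables $(k_1,\ldots,k_{m+1})$, \begin{multline*} D_i \sum_{l_{1}=k_{1}}^{k_{2}} \sum_{l_{2}=k_{2}}^{k_{3}} \cdots \sum_{l_{m}=k_{m}}^{k_{m+1}} G(l_{1},\ldots,l_{m}) \\ = - \frac{1}{2} \Bigg( \sum_{l_1=k_{1}}^{k_2} \cdots \sum_{l_{i-2}=k_{i-2}}^{k_{i-1}} \sum_{l_{i-1}=k_i+1}^{k_{i+1}+1} \sum_{l_{i}=k_i}^{k_{i+1}} \sum_{l_{i+1}=k_{i}-1}^{k_{i+2}} \sum_{l_{i+2}=k_{i+2}}^{k_{i+3}} \cdots \sum_{l_{m}=k_{m}}^{k_{m+1}} D_{i-1} G (\mathbf{l}) \\ + \sum_{l_1=k_{1}}^{k_2} \cdots \sum_{l_{i-2}=k_{i-2}}^{k_{i-1}} \sum_{l_{i-1}=k_{i-1}}^{k_{i}} \sum_{l_{i}=k_{i}}^{k_{i+1}} \sum_{l_{i+1}=k_{i}-1}^{k_{i+1}-1} \sum_{l_{i+2}=k_{i+2}}^{k_{i+3}} \cdots \sum_{l_{m}=k_{m}}^{k_{m+1}} D_{i} G (\mathbf{l}) \Bigg), \end{multline*} where by convention $D_0G(\mathbf{l})=0$ and $D_mG(\mathbf{l})=0$.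
   Context: For a function $H(k_1,\ldots,k_N)$ of $N$ integer variables and $1\le j\le N-1$, $D_jH(k_1,\ldots,k_N)=H(k_1,\ldots,k_N)+H(k_1,\ldots,k_{j-1},k_{j+1}+1,k_j-1,k_{j+2},\ldots,k_N)$. Sums use the convention: $\sum_{i=a}^bf(i)=f(a)+\cdots+f(b)$ if $a\le b$, $0$ if $b=a-1$, and $-f(b+1)-\cdots-f(a-1)$ if $b+1\le a-1$. *)

(* Defs.v *)
From mathcomp Require Import all_boot all_order all_algebra.
Set Implicit Arguments. Unset Strict Implicit. Unset Printing Implicit Defensive.
Import Order.TTheory GRing.Theory Num.Theory.
Local Open Scope ring_scope.

(* Signed sum convention: sum_{i=a}^b f(i) = f(a)+...+f(b) if a <= b,
   0 if b = a-1, and -f(b+1)-...-f(a-1) if b+1 <= a-1. *)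
Definition gsum (R : zmodType) (a b : int) (f : int -> R) : R :=
  if a <= b then \sum_(0 <= t < absz (b - a + 1)%R) f (a + t%:Z)
  else - \sum_(0 <= t < absz (a - b - 1)%R) f (b + 1 + t%:Z).

Fixpoint nsum (R : zmodType) (bs : seq (int * int)) (F : seq int -> R) : R :=
  match bs with
  | [::] => F [::]
  | (a, b) :: bs' => gsum a b (fun l => nsum bs' (fun s => F (l :: s)))
  end.

Definition vec (m : nat) (s : seq int) : {ffun 'I_m -> int} :=
  [ffun x : 'I_m => nth 0 s x].

(* 1-based coordinate k_j of k = (k_1,...,k_N) (0 if out of range). *)
Definition coord (N : nat) (k : {ffun 'I_N -> int}) (j : nat) : int :=
  odflt 0 (omap k (insub j.-1 : option 'I_N)).

Definition Dswap (N : nat) (j : nat) (k : {ffun 'I_N -> int}) :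
  {ffun 'I_N -> int} :=
  [ffun x : 'I_N => if (x.+1 == j)%N then coord k j.+1 + 1
                    else if (x.+1 == j.+1)%N then coord k j - 1 else k x].

(* D_j H(k) = H(k) + H(Dswap j k) for 1 <= j <= N-1; by convention D_j H = 0
   otherwise (this covers D_0 G = 0 and D_m G = 0 for G of m variables). *)
Definition D (R : zmodType) (N : nat) (j : nat)
  (H : {ffun 'I_N -> int} -> R) : {ffun 'I_N -> int} -> R :=
  fun k => if (0 < j < N)%N then H k + H (Dswap j k) else 0.

Definition bnd0 (N : nat) (k : {ffun 'I_N -> int}) (j : nat) : int * int :=
  (coord k j, coord k j.+1).

(* Bounds of the first sum on the right-hand side (the D_{i-1} term). *)
Definition bnd1 (N : nat) (k : {ffun 'I_N -> int}) (i j : nat) : int * int :=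
  if (j == i.-1)%N then (coord k i + 1, coord k i.+1 + 1)
  else if (j == i.+1)%N then (coord k i - 1, coord k i.+2)
  else bnd0 k j.

(* Bounds of the second sum on the right-hand side (the D_i term). *)
Definition bnd2 (N : nat) (k : {ffun 'I_N -> int}) (i j : nat) : int * int :=
  if (j == i.+1)%N then (coord k i - 1, coord k i.+1 - 1)
  else bnd0 k j.

(* Main.v *)
Require Import Defs.
From mathcomp Require Import all_boot all_order all_algebra.
From mathcomp Require Import zify ring lra.
Import Order.TTheory GRing.Theory Num.Theory.
Require Import Defs.
Local Open Scope ring_scope.



Section G0.
Variable R : zmodType.
Implicit Types (f g : int -> R) (a b c d : int).
Lemma gsum_ext a b f g : (forall x, f x = g x) -> gsum a b f = gsum a b g.
Proof. by move=> e; rewrite /gsum; case: ifP => _; [|congr (- _)]; apply: eq_bigr => t _; rewrite e. Qed.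
Lemma gsum_add a b f g : gsum a b (fun x => f x + g x) = gsum a b f + gsum a b g.
Proof. by rewrite /gsum; case: ifP => _; rewrite big_split // opprD. Qed.
Lemma gsum_opp a b f : gsum a b (fun x => - f x) = - gsum a b f.
Proof. by rewrite /gsum; case: ifP => _; rewrite sumrN. Qed.
Lemma gsum0 a b : gsum a b (fun _ => (0 : R)) = 0.
Proof. by rewrite /gsum; case: ifP => _; rewrite big1 ?oppr0. Qed.
End G0.

Section G.
Variable R : comNzRingType.
Implicit Types (f g : int -> R) (a b c d : int).



Lemma gsum_empty a f : gsum a (a - 1) f = 0.
Proof.
rewrite /gsum ifF; last by apply/negbTE; rewrite -ltNge ltrBlDr ltrDl.
by rewrite (_ : a - (a - 1) - 1 = 0) ?big_geq ?oppr0 //; ring.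
Qed.

Lemma gsum_step a b f : gsum a (b + 1) f = gsum a b f + f (b + 1).
Proof.
rewrite /gsum.
case: (lerP a b) => hab.
  have [n hn] : exists n : nat, b = a + n%:Z.
    by exists (absz (b - a)); rewrite abszE ger0_norm ?subr_ge0 //; ring.
  subst b. rewrite ifT; last by lia.
  rewrite (_ : a + n%:Z + 1 - a + 1 = (n.+2)%:Z); last by lia.
  rewrite (_ : a + n%:Z - a + 1 = (n.+1)%:Z); last by lia.
  rewrite /= big_nat_recr //=; congr (_ + f _); lia.
case: (lerP a (b + 1)) => hab1.
  have e : a = b + 1 by lia.
  subst a. rewrite (_ : b + 1 - (b + 1) + 1 = 1); last by ring.
  rewrite (_ : b + 1 - b - 1 = 0); last by ring.
  by rewrite big_nat1 big_geq // oppr0 add0r addr0.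
have [n hn] : exists n : nat, a = b + 2 + n%:Z.
  exists (absz (a - b - 2)%R); rewrite abszE ger0_norm; last by lia.
  ring.
subst a.
rewrite (_ : b + 2 + n%:Z - (b + 1) - 1 = n%:Z); last by ring.
rewrite (_ : b + 2 + n%:Z - b - 1 = (n.+1)%:Z); last by lia.
rewrite /= big_nat_recl // opprD (_ : b + 1 + 0%Z = b + 1); last by lia. set S1 := \sum_(_ <= _ < _) _; set S2 := \sum_(_ <= _ < _) _; rewrite addrAC addNr add0r /S1 /S2; congr (- _).
apply: eq_bigr => t _; congr f; lia.
Qed.


Lemma gsum_pref a b f : gsum a b f = gsum 0 b f - gsum 0 (a - 1) f.
Proof.
pose U x := gsum a x f - (gsum 0 x f - gsum 0 (a - 1) f).
have Us x : U (x + 1) = U x.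
  rewrite /U !gsum_step; ring.
have U0 n : U (a - 1 + n) = 0.
  elim/int_rect: n => [|n IH|n IH].
  - by rewrite addr0 /U gsum_empty subrr subr0.
  - by rewrite (_ : a - 1 + n.+1%:Z = a - 1 + n + 1) ?Us //; lia.
  - by rewrite -IH (_ : a - 1 + - n%:Z = a - 1 + - n.+1%:Z + 1) ?Us //; lia.
have := U0 (b - (a - 1)).
rewrite (_ : a - 1 + (b - (a - 1)) = b); last by lia.
by rewrite /U => /eqP; rewrite subr_eq0 => /eqP.
Qed.

Lemma gsum_split a b c f : gsum a b f + gsum (b + 1) c f = gsum a c f.
Proof.
rewrite [gsum (b + 1) c f]gsum_pref [gsum a b f]gsum_pref [gsum a c f]gsum_pref addrK.
by rewrite addrC addrA subrK.
Qed.

Lemma gsum_rev b c f : gsum (c + 1) (b - 1) f = - gsum b c f.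
Proof. by rewrite gsum_pref [gsum b c f]gsum_pref addrK opprB. Qed.







Lemma gsum_exch a b c d (F : int -> int -> R) :
  gsum a b (fun x => gsum c d (fun y => F x y)) =
  gsum c d (fun y => gsum a b (fun x => F x y)).
Proof.
rewrite /gsum; case: (a <= b); case: (c <= d);
rewrite ?sumrN ?opprK; try congr (- _); exact: exchange_big.
Qed.

Lemma gsum_shift a b s f :
  gsum (a + s) (b + s) f = gsum a b (fun x => f (x + s)).
Proof.
rewrite /gsum lerD2r (_ : b + s - (a + s) + 1 = b - a + 1); last by ring.
rewrite (_ : a + s - (b + s) - 1 = a - b - 1); last by ring.
case: ifP => _; [|congr (- _)]; apply: eq_bigr => t _; congr f; ring.
Qed.

Lemma gsum_sym p q p' q' (h : int -> int -> R) : p' = p + 1 -> q' = q + 1 ->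
  gsum p' q' (fun x => gsum p q (fun y => h (y + 1) (x - 1))) =
  gsum p' q' (fun x => gsum p q (fun y => h x y)).
Proof.
move=> -> ->; rewrite gsum_exch.
transitivity (gsum p q (fun y => gsum p q (fun x => h (y + 1) x))).
  apply: gsum_ext => y; rewrite gsum_shift; apply: gsum_ext => x; by rewrite addrK.
by rewrite gsum_shift.
Qed.


Lemma gsum_split' a b c f : gsum a c f = gsum a (b - 1) f + gsum b c f.
Proof. by rewrite -(gsum_split a (b - 1)) subrK. Qed.

Lemma gsum_add2 a b c d (F1 F2 : int -> int -> R) :
  gsum a b (fun x => gsum c d (fun y => F1 x y + F2 x y)) =
  gsum a b (fun x => gsum c d (fun y => F1 x y)) + gsum a b (fun x => gsum c d (fun y => F2 x y)).
Proof. rewrite -gsum_add; apply: gsum_ext => x; exact: gsum_add. Qed.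

Lemma core3 a b c d (g : int -> int -> int -> R) :
  gsum a b (fun x => gsum b c (fun y => gsum c d (fun z => g x y z))) +
  gsum a (c + 1) (fun x => gsum (c + 1) (b - 1) (fun y => gsum (b - 1) d (fun z => g x y z)))
  = - (gsum (b + 1) (c + 1) (fun x => gsum b c (fun y => gsum (b - 1) d (fun z => g x y z))) +
       gsum a b (fun x => gsum b c (fun y => gsum (b - 1) (c - 1) (fun z => g x y z)))).
Proof.
have e1 : gsum a (c + 1) (fun x => gsum (c + 1) (b - 1) (fun y => gsum (b - 1) d (fun z => g x y z)))
   = - gsum a (c + 1) (fun x => gsum b c (fun y => gsum (b - 1) d (fun z => g x y z))).
  by rewrite -gsum_opp; apply: gsum_ext => x; rewrite gsum_rev.
rewrite e1 -(gsum_split a b (c + 1)).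
have e3 : gsum a b (fun x => gsum b c (fun y => gsum (b - 1) d (fun z => g x y z))) =
   gsum a b (fun x => gsum b c (fun y => gsum (b - 1) (c - 1) (fun z => g x y z)))
 + gsum a b (fun x => gsum b c (fun y => gsum c d (fun z => g x y z))).
  rewrite -gsum_add2; apply: gsum_ext => x; apply: gsum_ext => y.
  by rewrite (gsum_split' _ c).
rewrite e3; ring.
Qed.

Lemma core2L b c d (g : int -> int -> R) :
  gsum b c (fun y => gsum c d (fun z => g y z)) +
  gsum (c + 1) (b - 1) (fun y => gsum (b - 1) d (fun z => g y z))
  = - gsum b c (fun y => gsum (b - 1) (c - 1) (fun z => g y z)).
Proof.
rewrite gsum_rev.
have e3 : gsum b c (fun y => gsum (b - 1) d (fun z => g y z)) =
   gsum b c (fun y => gsum (b - 1) (c - 1) (fun z => g y z))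
 + gsum b c (fun y => gsum c d (fun z => g y z)).
  rewrite -gsum_add; apply: gsum_ext => y; by rewrite (gsum_split' _ c).
rewrite e3; ring.
Qed.

Lemma core2R a b c (g : int -> int -> R) :
  gsum a b (fun x => gsum b c (fun y => g x y)) +
  gsum a (c + 1) (fun x => gsum (c + 1) (b - 1) (fun y => g x y))
  = - gsum (b + 1) (c + 1) (fun x => gsum b c (fun y => g x y)).
Proof.
have e1 : gsum a (c + 1) (fun x => gsum (c + 1) (b - 1) (fun y => g x y))
   = - gsum a (c + 1) (fun x => gsum b c (fun y => g x y)).
  by rewrite -gsum_opp; apply: gsum_ext => x; rewrite gsum_rev.
rewrite e1 -(gsum_split a b (c + 1)). ring.
Qed.

Lemma core1 b c f : gsum b c f + gsum (c + 1) (b - 1) f = 0.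
Proof. by rewrite gsum_rev subrr. Qed.

End G.



Section N.
Variable R : zmodType.

Lemma nsum_ext (bs : seq (int * int)) (F1 F2 : seq int -> R) :
  (forall s, size s = size bs -> F1 s = F2 s) -> nsum bs F1 = nsum bs F2.
Proof.
elim: bs F1 F2 => [|[a b] bs IH] F1 F2 e /=; first exact: e.
apply: gsum_ext => l; apply: IH => s hs; apply: e => /=; by rewrite hs.
Qed.

Lemma nsum_cat (bs1 bs2 : seq (int * int)) (F : seq int -> R) :
  nsum (bs1 ++ bs2) F = nsum bs1 (fun s1 => nsum bs2 (fun s2 => F (s1 ++ s2))).
Proof.
elim: bs1 F => [|[a b] bs IH] F //=.
apply: gsum_ext => l; exact: IH.
Qed.

End N.

Lemma nsum_add (R : zmodType) (bs : seq (int * int)) (F1 F2 : seq int -> R) :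
  nsum bs (fun s => F1 s + F2 s) = nsum bs F1 + nsum bs F2.
Proof.
elim: bs F1 F2 => [|[a b] bs IH] F1 F2 //=.
rewrite -gsum_add; apply: gsum_ext => l; exact: IH.
Qed.

Lemma nsum_opp (R : zmodType) (bs : seq (int * int)) (F : seq int -> R) :
  nsum bs (fun s => - F s) = - nsum bs F.
Proof.
elim: bs F => [|[a b] bs IH] F //=.
rewrite -gsum_opp; apply: gsum_ext => l; exact: IH.
Qed.

Lemma nsum0 (R : zmodType) (bs : seq (int * int)) :
  nsum bs (fun _ => (0 : R)) = 0.
Proof.
elim: bs => [|[a b] bs IH] //=.
by rewrite -[RHS](gsum0 R a b); apply: gsum_ext => l; exact: IH.
Qed.

Lemma coord_vec m (s : seq int) j : (0 < j <= m)%N -> coord (vec m s) j = nth 0 s j.-1.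
Proof.
move=> hj; rewrite /coord; case: insubP => [u _ vu|nP] /=.
  by rewrite ffunE vu.
by exfalso; move: nP; rewrite -ltnS prednK; lia.
Qed.

Lemma Dswap_vec m j (s1 s3 : seq int) x y : (0 < j < m)%N -> size s1 = j.-1 ->
  Dswap j (vec m (s1 ++ x :: y :: s3)) = vec m (s1 ++ (y + 1) :: (x - 1) :: s3).
Proof.
case: j => [|p] // hj /= hs.
apply/ffunP => n; rewrite !ffunE !coord_vec /=; try lia.
rewrite !nth_cat hs.
case: (ltngtP n p) => h.
- by rewrite ifF; [rewrite ifF|]; lia.
- rewrite ifF; last by lia.
  case: eqP => e.
    have -> : (n - p = 1)%N by lia.
    by rewrite ltnn subnn.
  have [q ->] : exists q, (n - p = q.+2)%N by exists (n - p).-2; lia.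
  by [].
- rewrite h eqxx subnn (_ : (p.+1 < p)%N = false); last by lia.
  by rewrite subSnn.
Qed.

Lemma coord_Dswap N i (k : {ffun 'I_N -> int}) j : (0 < j)%N -> (i < N)%N ->
  coord (Dswap i k) j =
  if j == i then coord k i.+1 + 1 else if j == i.+1 then coord k i - 1 else coord k j.
Proof.
move=> hj hi; rewrite {1 4}/coord; case: insubP => [u _ vu|nP] /=.
  by rewrite ffunE vu prednK.
rewrite ifF; last by lia.
by rewrite ifF; last by lia.
Qed.



Lemma nsum_frame (R : zmodType) (pre mid post : seq (int * int)) (F : seq int -> R) :
  nsum (pre ++ mid ++ post) F =
  nsum pre (fun s1 => nsum mid (fun s2 => nsum post (fun s3 => F (s1 ++ s2 ++ s3)))).
Proof.
rewrite nsum_cat; apply: nsum_ext => s1 _; exact: nsum_cat.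
Qed.

Lemma gsum_add3 (R : zmodType) a b c d e f (F1 F2 : int -> int -> int -> R) :
  gsum a b (fun x => gsum c d (fun y => gsum e f (fun z => F1 x y z + F2 x y z))) =
  gsum a b (fun x => gsum c d (fun y => gsum e f (fun z => F1 x y z))) +
  gsum a b (fun x => gsum c d (fun y => gsum e f (fun z => F2 x y z))).
Proof.
rewrite -gsum_add; apply: gsum_ext => x; rewrite -gsum_add; apply: gsum_ext => y.
exact: gsum_add.
Qed.

Lemma interior (R : numFieldType) (pre post : seq (int * int)) (a b c d : int)
  (Gv DA DB : seq int -> R) :
  (forall s1 s3 x y z, size s1 = size pre ->
     DA (s1 ++ [:: x; y; z] ++ s3) = Gv (s1 ++ [:: x; y; z] ++ s3) + Gv (s1 ++ [:: y + 1; x - 1; z] ++ s3)) ->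
  (forall s1 s3 x y z, size s1 = size pre ->
     DB (s1 ++ [:: x; y; z] ++ s3) = Gv (s1 ++ [:: x; y; z] ++ s3) + Gv (s1 ++ [:: x; z + 1; y - 1] ++ s3)) ->
  nsum (pre ++ [:: (a, b); (b, c); (c, d)] ++ post) Gv +
  nsum (pre ++ [:: (a, c + 1); (c + 1, b - 1); (b - 1, d)] ++ post) Gv =
  - 2^-1 * (nsum (pre ++ [:: (b + 1, c + 1); (b, c); (b - 1, d)] ++ post) DA +
            nsum (pre ++ [:: (a, b); (b, c); (b - 1, c - 1)] ++ post) DB).
Proof.
move=> hA hB; rewrite !nsum_frame /=.
set g := fun s1 x y z => nsum post (fun s3 => Gv (s1 ++ [:: x; y; z] ++ s3)).
pose A s1 := gsum (b + 1) (c + 1) (fun x => gsum b c (fun y => gsum (b - 1) d (fun z => g s1 x y z))).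
pose B s1 := gsum a b (fun x => gsum b c (fun y => gsum (b - 1) (c - 1) (fun z => g s1 x y z))).
have eA : nsum pre (fun s1 => gsum (b + 1) (c + 1) (fun x => gsum b c (fun y => gsum (b - 1) d
            (fun z => nsum post (fun s3 => DA (s1 ++ [:: x; y; z] ++ s3))))))
          = nsum pre A + nsum pre A.
  rewrite -nsum_add; apply: nsum_ext => s1 hs1.
  transitivity (gsum (b + 1) (c + 1) (fun x => gsum b c (fun y => gsum (b - 1) d (fun z => g s1 x y z + g s1 (y + 1) (x - 1) z)))).
    apply: gsum_ext => x; apply: gsum_ext => y; apply: gsum_ext => z.
    rewrite /g -nsum_add; apply: nsum_ext => s3 _; exact: hA.
  rewrite gsum_add3; congr (_ + _).
  exact: (@gsum_sym _ b c (b + 1) (c + 1) (fun x y => gsum (b - 1) d (fun z => g s1 x y z)) erefl erefl).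
have eB : nsum pre (fun s1 => gsum a b (fun x => gsum b c (fun y => gsum (b - 1) (c - 1)
            (fun z => nsum post (fun s3 => DB (s1 ++ [:: x; y; z] ++ s3))))))
          = nsum pre B + nsum pre B.
  rewrite -nsum_add; apply: nsum_ext => s1 hs1.
  transitivity (gsum a b (fun x => gsum b c (fun y => gsum (b - 1) (c - 1) (fun z => g s1 x y z + g s1 x (z + 1) (y - 1))))).
    apply: gsum_ext => x; apply: gsum_ext => y; apply: gsum_ext => z.
    rewrite /g -nsum_add; apply: nsum_ext => s3 _; exact: hB.
  rewrite gsum_add3; congr (_ + _).
  apply: gsum_ext => x.
  exact: (@gsum_sym _ (b - 1) (c - 1) b c (g s1 x) (esym (subrK 1 b)) (esym (subrK 1 c))).
rewrite eA eB.
have e0 : nsum pre (fun s1 => gsum a b (fun x => gsum b c (fun y => gsum c d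
            (fun z => nsum post (fun s3 => Gv (s1 ++ [:: x; y; z] ++ s3)))))) +
          nsum pre (fun s1 => gsum a (c + 1) (fun x => gsum (c + 1) (b - 1) (fun y => gsum (b - 1) d
            (fun z => nsum post (fun s3 => Gv (s1 ++ [:: x; y; z] ++ s3))))))
          = - (nsum pre A + nsum pre B).
  rewrite -nsum_add -nsum_add -nsum_opp; apply: nsum_ext => s1 _.
  exact: (core3 _ a b c d (g s1)).
rewrite e0; field; by [].
Qed.

Lemma leftL (R : numFieldType) (post L1 : seq (int * int)) (b c d : int)
  (Gv DA DB : seq int -> R) : (forall s, DA s = 0) ->
  (forall s3 y z,
     DB (y :: z :: s3) = Gv (y :: z :: s3) + Gv ((z + 1) :: (y - 1) :: s3)) ->
  nsum ([:: (b, c); (c, d)] ++ post) Gv +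
  nsum ([:: (c + 1, b - 1); (b - 1, d)] ++ post) Gv =
  - 2^-1 * (nsum L1 DA +
            nsum ([:: (b, c); (b - 1, c - 1)] ++ post) DB).
Proof.
move=> hA0 hB.
have -> : nsum L1 DA = 0 by rewrite -(nsum0 R L1); apply: nsum_ext => s _; exact: hA0.
rewrite add0r !nsum_cat /=.
set g := fun y z => nsum post (fun s3 => Gv (y :: z :: s3)).
pose B := gsum b c (fun y => gsum (b - 1) (c - 1) (fun z => g y z)).
have eB : gsum b c (fun y => gsum (b - 1) (c - 1) (fun z => nsum post (fun s3 => DB (y :: z :: s3))))
          = B + B.
  transitivity (gsum b c (fun y => gsum (b - 1) (c - 1) (fun z => g y z + g (z + 1) (y - 1)))).
    apply: gsum_ext => y; apply: gsum_ext => z.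
    rewrite /g -nsum_add; apply: nsum_ext => s3 _; exact: hB.
  rewrite gsum_add2; congr (_ + _).
  exact: (@gsum_sym _ (b - 1) (c - 1) b c g (esym (subrK 1 b)) (esym (subrK 1 c))).
rewrite eB (core2L _ b c d g); change (- B = - 2^-1 * (B + B)); clearbody B; field; by [].
Qed.

Lemma rightR (R : numFieldType) (pre L2 : seq (int * int)) (a b c : int)
  (Gv DA DB : seq int -> R) : (forall s, DB s = 0) ->
  (forall s1 x y, size s1 = size pre ->
     DA (s1 ++ [:: x; y]) = Gv (s1 ++ [:: x; y]) + Gv (s1 ++ [:: y + 1; x - 1])) ->
  nsum (pre ++ [:: (a, b); (b, c)]) Gv +
  nsum (pre ++ [:: (a, c + 1); (c + 1, b - 1)]) Gv =
  - 2^-1 * (nsum (pre ++ [:: (b + 1, c + 1); (b, c)]) DA + nsum L2 DB).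
Proof.
move=> hB0 hA.
have -> : nsum L2 DB = 0 by rewrite -(nsum0 R L2); apply: nsum_ext => s _; exact: hB0.
rewrite addr0 !nsum_cat /=.
set g := fun s1 x y => Gv (s1 ++ [:: x; y]).
pose A s1 := gsum (b + 1) (c + 1) (fun x => gsum b c (fun y => g s1 x y)).
have eA : nsum pre (fun s1 => gsum (b + 1) (c + 1) (fun x => gsum b c (fun y => DA (s1 ++ [:: x; y]))))
          = nsum pre A + nsum pre A.
  rewrite -nsum_add; apply: nsum_ext => s1 hs1.
  transitivity (gsum (b + 1) (c + 1) (fun x => gsum b c (fun y => g s1 x y + g s1 (y + 1) (x - 1)))).
    apply: gsum_ext => x; apply: gsum_ext => y; exact: hA.
  rewrite gsum_add2; congr (_ + _).
  exact: (@gsum_sym _ b c (b + 1) (c + 1) (g s1) erefl erefl).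
rewrite eA.
have e0 : nsum pre (fun s1 => gsum a b (fun x => gsum b c (fun y => Gv (s1 ++ [:: x; y])))) +
          nsum pre (fun s1 => gsum a (c + 1) (fun x => gsum (c + 1) (b - 1) (fun y => Gv (s1 ++ [:: x; y]))))
          = - nsum pre A.
  rewrite -nsum_add -nsum_opp; apply: nsum_ext => s1 _.
  exact: (core2R _ a b c (g s1)).
rewrite e0; field; by [].
Qed.

Lemma single (R : numFieldType) (L1 L2 : seq (int * int)) (b c : int) (Gv DA DB : seq int -> R) :
  (forall s, DA s = 0) -> (forall s, DB s = 0) ->
  nsum [:: (b, c)] Gv + nsum [:: (c + 1, b - 1)] Gv =
  - 2^-1 * (nsum L1 DA + nsum L2 DB).
Proof.
move=> hA0 hB0.
have -> : nsum L1 DA = 0 by rewrite -(nsum0 R L1); apply: nsum_ext => s _; exact: hA0.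
have -> : nsum L2 DB = 0 by rewrite -(nsum0 R L2); apply: nsum_ext => s _; exact: hB0.
by rewrite addr0 mulr0 /= core1.
Qed.



Ltac dec := repeat match goal with
 | |- context [ (?a == ?b)%N ] =>
   first [ rewrite (_ : (a == b)%N = true); last by apply/eqP; lia
         | rewrite (_ : (a == b)%N = false); last by apply/negbTE/eqP; lia ] end.

Lemma map_bnd0_Dswap N i (k : {ffun 'I_N -> int}) (s : seq nat) : (i < N)%N ->
  (forall j, j \in s -> (0 < j)%N && ((j.+1 < i)%N || (i.+1 < j)%N)) ->
  [seq bnd0 (Dswap i k) j | j <- s] = [seq bnd0 k j | j <- s].
Proof.
move=> hi hs; apply/eq_in_map => j /hs /andP[j0 hj].
rewrite /bnd0 !coord_Dswap //; dec => //.
Qed.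

Lemma map_bnd1 N i (k : {ffun 'I_N -> int}) (s : seq nat) :
  (forall j, j \in s -> (j != i.-1)%N && (j != i.+1)%N) ->
  [seq bnd1 k i j | j <- s] = [seq bnd0 k j | j <- s].
Proof.
move=> hs; apply/eq_in_map => j /hs /andP[h1 h2].
by rewrite /bnd1 (negbTE h1) (negbTE h2).
Qed.

Lemma map_bnd2 N i (k : {ffun 'I_N -> int}) (s : seq nat) :
  (forall j, j \in s -> (j != i.+1)%N) ->
  [seq bnd2 k i j | j <- s] = [seq bnd0 k j | j <- s].
Proof.
move=> hs; apply/eq_in_map => j /hs h2.
by rewrite /bnd2 (negbTE h2).
Qed.

Theorem lemma11 (R : numFieldType) (m i : nat)
  (G : {ffun 'I_m -> int} -> R) (k : {ffun 'I_m.+1 -> int}) :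
  (0 < m)%N -> (1 <= i <= m)%N ->
  D i (fun k' : {ffun 'I_m.+1 -> int} =>
         nsum [seq bnd0 k' j | j <- iota 1 m] (fun s => G (vec m s))) k =
  - 2^-1 * ( nsum [seq bnd1 k i j | j <- iota 1 m] (fun s => D i.-1 G (vec m s))
           + nsum [seq bnd2 k i j | j <- iota 1 m] (fun s => D i G (vec m s)) ).
Proof.
move=> m0 /andP[i1 im].
rewrite {1}/D i1 ltnS im /=.
have [ei|ei] := eqVneq i 1; have [em|em] := eqVneq i m.
- subst i; subst m.
  have e0' : [seq bnd0 (Dswap 1 k) j | j <- iota 1 1] = [:: (coord k 2 + 1, coord k 1 - 1)].
    by rewrite /= /bnd0 !coord_Dswap.
  rewrite e0'; apply: (@single _ _ _ (coord k 1) (coord k 2)) => s; by rewrite /D.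
- subst i.
  have [r mr] : exists r, m = r.+2 by exists m.-2; lia.
  subst m; clear em im m0 i1.
  have eio : iota 1 r.+2 = [:: 1; 2] ++ iota 3 r by [].
  set post := [seq bnd0 k j | j <- iota 3 r].
  have e0 : [seq bnd0 k j | j <- iota 1 r.+2] =
     [:: (coord k 1, coord k 2); (coord k 2, coord k 3)] ++ post by [].
  have e0' : [seq bnd0 (Dswap 1 k) j | j <- iota 1 r.+2] =
     [:: (coord k 2 + 1, coord k 1 - 1); (coord k 1 - 1, coord k 3)] ++ post.
    have t0 : (1 < r.+3)%N by lia.
    have t2 : forall j, j \in iota 3 r -> (0 < j)%N && ((j.+1 < 1)%N || (2 < j)%N).
      by move=> j; rewrite mem_iota; lia.
    rewrite eio map_cat (@map_bnd0_Dswap _ _ k _ t0 t2).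
    congr (_ ++ _); rewrite /= /bnd0 !coord_Dswap //.
  have e2 : [seq bnd2 k 1 j | j <- iota 1 r.+2] =
     [:: (coord k 1, coord k 2); (coord k 1 - 1, coord k 2 - 1)] ++ post.
    have t2 : forall j, j \in iota 3 r -> (j != 2)%N.
      by move=> j; rewrite mem_iota; lia.
    by rewrite eio map_cat (@map_bnd2 _ _ k _ t2).
  rewrite e0 e0' e2; apply: leftL => [s|s3 y z]; first by rewrite /D.
  rewrite /D /=; congr (_ + G _).
  exact: (@Dswap_vec r.+2 1 [::] s3 y z).
- subst i.
  have [p mp] : exists p, m = p.+2 by exists m.-2; lia.
  subst m; clear ei im m0 i1.
  have eio : iota 1 p.+2 = iota 1 p ++ [:: p.+1; p.+2].
    by rewrite -[in LHS]addn2 iotaD add1n.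
  set pre := [seq bnd0 k j | j <- iota 1 p].
  have e0 : [seq bnd0 k j | j <- iota 1 p.+2] =
    pre ++ [:: (coord k p.+1, coord k p.+2); (coord k p.+2, coord k p.+3)].
    by rewrite eio !map_cat.
  have e0' : [seq bnd0 (Dswap p.+2 k) j | j <- iota 1 p.+2] =
    pre ++ [:: (coord k p.+1, coord k p.+3 + 1); (coord k p.+3 + 1, coord k p.+2 - 1)].
    have t0 : (p.+2 < p.+3)%N by lia.
    have t1 : forall j, j \in iota 1 p -> (0 < j)%N && ((j.+1 < p.+2)%N || (p.+3 < j)%N).
      by move=> j; rewrite mem_iota; lia.
    rewrite eio !map_cat (@map_bnd0_Dswap _ _ k _ t0 t1).
    congr (_ ++ _); rewrite /= /bnd0 !coord_Dswap //; dec => //; lia.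
  have e1 : [seq bnd1 k p.+2 j | j <- iota 1 p.+2] =
    pre ++ [:: (coord k p.+2 + 1, coord k p.+3 + 1); (coord k p.+2, coord k p.+3)].
    have t1 : forall j, j \in iota 1 p -> (j != p.+2.-1)%N && (j != p.+3)%N.
      by move=> j; rewrite mem_iota; lia.
    rewrite eio !map_cat (@map_bnd1 _ _ k _ t1).
    congr (_ ++ _); rewrite /= /bnd1 /bnd0; dec => //.
  rewrite e0 e0' e1; apply: rightR => [s|s1 x y hs].
    by rewrite /D ltnn andbF.
  rewrite size_map size_iota in hs.
  rewrite /D ifT; last by lia.
  by rewrite Dswap_vec //; lia.
have [p ip] : exists p, i = p.+2 by exists i.-2; lia.
have [r mr] : exists r, m = (p + 3 + r)%N by exists (m - i - 1)%N; lia.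
subst i m; clear ei em i1 im m0.
have eio : iota 1 (p + 3 + r) = iota 1 p ++ [:: p.+1; p.+2; p.+3] ++ iota p.+4 r.
  by rewrite -addnA iotaD add1n.
set pre := [seq bnd0 k j | j <- iota 1 p].
set post := [seq bnd0 k j | j <- iota p.+4 r].
have e0 : [seq bnd0 k j | j <- iota 1 (p + 3 + r)] =
  pre ++ [:: (coord k p.+1, coord k p.+2); (coord k p.+2, coord k p.+3);
             (coord k p.+3, coord k p.+4)] ++ post.
  by rewrite eio !map_cat.
have e0' : [seq bnd0 (Dswap p.+2 k) j | j <- iota 1 (p + 3 + r)] =
  pre ++ [:: (coord k p.+1, coord k p.+3 + 1); (coord k p.+3 + 1, coord k p.+2 - 1);
             (coord k p.+2 - 1, coord k p.+4)] ++ post.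
  have t0 : (p.+2 < (p + 3 + r).+1)%N by lia.
  have t1 : forall j, j \in iota 1 p -> (0 < j)%N && ((j.+1 < p.+2)%N || (p.+3 < j)%N).
    by move=> j; rewrite mem_iota; lia.
  have t2 : forall j, j \in iota p.+4 r -> (0 < j)%N && ((j.+1 < p.+2)%N || (p.+3 < j)%N).
    by move=> j; rewrite mem_iota; lia.
  rewrite eio !map_cat (@map_bnd0_Dswap _ _ k _ t0 t1) (@map_bnd0_Dswap _ _ k _ t0 t2).
  congr (_ ++ _ ++ _); rewrite /= /bnd0 !coord_Dswap //; dec => //; lia.
have e1 : [seq bnd1 k p.+2 j | j <- iota 1 (p + 3 + r)] =
  pre ++ [:: (coord k p.+2 + 1, coord k p.+3 + 1); (coord k p.+2, coord k p.+3);
             (coord k p.+2 - 1, coord k p.+4)] ++ post.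
  have t1 : forall j, j \in iota 1 p -> (j != p.+2.-1)%N && (j != p.+3)%N.
    by move=> j; rewrite mem_iota; lia.
  have t2 : forall j, j \in iota p.+4 r -> (j != p.+2.-1)%N && (j != p.+3)%N.
    by move=> j; rewrite mem_iota; lia.
  rewrite eio !map_cat (@map_bnd1 _ _ k _ t1) (@map_bnd1 _ _ k _ t2).
  congr (_ ++ _ ++ _); rewrite /= /bnd1 /bnd0; dec => //.
have e2 : [seq bnd2 k p.+2 j | j <- iota 1 (p + 3 + r)] =
  pre ++ [:: (coord k p.+1, coord k p.+2); (coord k p.+2, coord k p.+3);
             (coord k p.+2 - 1, coord k p.+3 - 1)] ++ post.
  have t1 : forall j, j \in iota 1 p -> (j != p.+3)%N.
    by move=> j; rewrite mem_iota; lia.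
  have t2 : forall j, j \in iota p.+4 r -> (j != p.+3)%N.
    by move=> j; rewrite mem_iota; lia.
  rewrite eio !map_cat (@map_bnd2 _ _ k _ t1) (@map_bnd2 _ _ k _ t2).
  congr (_ ++ _ ++ _); rewrite /= /bnd2 /bnd0; dec => //.
rewrite e0 e0' e1 e2; apply: interior.
- move=> s1 s3 x y z hs; rewrite size_map size_iota in hs.
  rewrite /D ifT; last by lia.
  by rewrite Dswap_vec //; lia.
- move=> s1 s3 x y z hs; rewrite size_map size_iota in hs.
  rewrite /D ifT; last by lia.
  rewrite (_ : s1 ++ [:: x; y; z] ++ s3 = rcons s1 x ++ y :: z :: s3); last by rewrite -cats1 -catA.
  rewrite Dswap_vec ?size_rcons ?hs //; last by lia.
  by rewrite -cats1 -!catA.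
Qed.
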